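(* Let $k\ge 1$ and $n\ge k$ be fixed. There is a streaming algorithm that, at every time at which the window contains $n$ elements, maintains a uniformly random subset of size $k$ (sampling without replacement, every $k$-subset of the active elements equally likely) of the current sequence-based sliding window of size $n$, using $O(k)$ memory in the worst case.
   Context: A data stream is a sequence $p_0,p_1,p_2,\dots$ of elements observed one at a time and only once. In the sequence-based sliding window model with window size $n$, after $N\ge n$ elements have arrived the active (non-expired) elements are the last $n$ arrived elements; all other arrived elements are expired. Memory is measured in the number of stored elements/machine words. *)

(* Defs.v *)
From mathcomp Require Import all_boot all_order all_algebra.
From Stdlib Require List.
Set Implicit Arguments. Unset Strict Implicit. Unset Printing Implicit Defensive.
Import Order.TTheory GRing.Theory Num.Theory.
Local Open Scope ring_scope.

(* A memory cell stores either a stream element or a machine word (nat). *)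
Definition cell (T : Type) := (T + nat)%type.
(* The memory state of an algorithm: a list of cells; memory = its length. *)
Definition mstate (T : Type) := seq (cell T).

(* A finitely supported probability distribution with rational weights. *)
Definition fdist (S : Type) := seq (rat * S).

Definition is_fdist (S : Type) (d : fdist S) : Prop :=
  all (fun p => 0 <= p.1) d /\ \sum_(p <- d) p.1 = 1.

(* A randomized streaming algorithm over elements of type T:
   - init : initial memory,
   - step : on the current memory and the newly arrived element, a random
            next memory (finitely supported distribution),
   - out  : the reported sample, as (element, arrival index) pairs. *)
Record salg (T : Type) := SAlg {
  init : mstate T;
  step : mstate T -> T -> fdist (mstate T);
  out  : mstate T -> seq (T * nat)
}.

Fixpoint run (T : Type) (A : salg T) (s : nat -> T) (N : nat)
  : fdist (mstate T) :=
  match N with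
  | 0 => [:: (1, init A)]
  | N'.+1 =>
      flatten [seq [seq (p.1 * q.1, q.2) | q <- step A p.2 (s N')]
              | p <- run A s N']
  end.

Definition prob (S : Type) (d : fdist S) (P : S -> bool) : rat :=
  \sum_(p <- d | P p.2) p.1.

Definition words (T : Type) (m : mstate T) : seq nat :=
  pmap (fun c => match c with inr w => Some w | inl _ => None end) m.

Definition in_window (n N i : nat) : bool := (N - n <= i < N)%N.

Definition sw_sampler (T : Type) (k n : nat) (A : salg T) (s : nat -> T) : Prop :=
  (forall m x, is_fdist (step A m x)) /\
  (forall N, (n <= N)%N ->
     (forall p, List.In p (run A s N) -> 0 < p.1 ->
        exists S : seq nat,
          [/\ uniq S, size S = k, all (in_window n N) S &
              out A p.2 = [seq (s i, i) | i <- S]]) /\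
     (forall X : seq nat, uniq X -> size X = k -> all (in_window n N) X ->
        prob (run A s N) (fun m => perm_eq [seq q.2 | q <- out A m] X)
        = ('C(n, k)%:R)^-1)).

(* Worst-case memory bound: at every time N, every reachable memory state has
   at most M cells, and each stored word has value at most (N+n+2)^c,
   i.e. O(log(N+n)) bits. *)
Definition mem_bound (T : Type) (A : salg T) (s : nat -> T) (n M c : nat) : Prop :=
  forall N p, List.In p (run A s N) -> 0 < p.1 ->
    (size p.2 <= M)%N /\ all (fun w => w <= (N + n + 2) ^ c)%N (words p.2).

(* Main.v *)
Require Import Defs.
From mathcomp Require Import all_boot all_order all_algebra.
From mathcomp Require Import zify.
Set Implicit Arguments. Unset Strict Implicit. Unset Printing Implicit Defensive.
Set Implicit Arguments. Unset Strict Implicit. Unset Printing Implicit Defensive.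

Fixpoint ins (A : Type) (r : nat) (y : A) (l : seq A) : seq A :=
  match r, l with
  | 0, _ => y :: l
  | r'.+1, x :: l' => x :: ins r' y l'
  | _.+1, [::] => [:: y]
  end.

Lemma ins_nil (A : Type) r (y : A) : ins r y [::] = [:: y].
Proof. by case: r. Qed.

Lemma take_ins (A : Type) k r (y : A) l :
  take k (ins r y (take k l)) = take k (ins r y l).
Proof.
elim: l k r => [|x l IH] [|k] [|r] //=.
- case: k => //= k; by rewrite take_takel.
- by rewrite IH.
Qed.

Lemma map_ins (A B : Type) (f : A -> B) r y l :
  map f (ins r y l) = ins r (f y) (map f l).
Proof. by elim: l r => [|x l IH] [|r] //=; rewrite IH. Qed.

Lemma perm_ins (A : eqType) r (y : A) l : perm_eq (ins r y l) (y :: l).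
Proof.
elim: l r => [|x l IH] [|r] //=.
rewrite (perm_trans (y := x :: y :: l)) //; first by rewrite perm_cons.
by rewrite -(cat1s x) -(cat1s y) perm_catCA.
Qed.

Lemma size_ins (A : Type) r (y : A) l : size (ins r y l) = (size l).+1.
Proof. by elim: l r => [|x l IH] [|r] //=; rewrite IH. Qed.

Lemma index_ins (A : eqType) r (y : A) l :
  y \notin l -> (r <= size l)%N -> index y (ins r y l) = r.
Proof.
elim: l r => [|x l IH] [|r] //=; rewrite ?eqxx //.
rewrite inE negb_or => /andP[yx yl] rl.
by rewrite eq_sym (negbTE yx) IH.
Qed.

Lemma filter_ins (A : eqType) r (y : A) l :
  y \notin l -> filter (predC1 y) (ins r y l) = l.
Proof.
elim: l r => [|x l IH] [|r] //=; rewrite ?eqxx //=.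
- move=> yl; rewrite /= inE negb_or in yl.
  case/andP: yl => yx yl; rewrite eq_sym yx.
  by congr cons; apply/all_filterP; apply/allP => z zl /=; apply/eqP => zy; rewrite -zy zl in yl.
- move=> yl; rewrite /= inE negb_or in yl.
  case/andP: yl => yx yl; rewrite eq_sym yx IH //.
Qed.

Lemma ins_index (A : eqType) (y : A) L :
  uniq L -> y \in L -> ins (index y L) y (filter (predC1 y) L) = L.
Proof.
elim: L => [|x L IH] //= /andP[xL uL]; rewrite inE.
case: eqP => [->|yx] /=; first move=> _.
  rewrite eqxx /=; congr cons; apply/all_filterP; apply/allP => z zl /=; apply/eqP => zy.
  by rewrite -zy zl in xL.
move=> yL; have xy : x != y by apply/eqP => xy; apply: yx.
by rewrite xy (negbTE xy) /= IH.
Qed.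

Lemma perm_map_bij (A B : eqType) (f : A -> B) (g : B -> A) (la : seq A) (lb : seq B) :
  uniq la -> uniq lb -> {in la, forall a, f a \in lb} -> {in lb, forall b, g b \in la} ->
  {in la, cancel f g} -> {in lb, cancel g f} -> perm_eq (map f la) lb.
Proof.
move=> ua ub fab gba fK gK; apply: uniq_perm => //.
  rewrite map_inj_in_uniq // => x y xa ya fxy.
  by rewrite -(fK x xa) fxy fK.
move=> b; apply/mapP/idP => [[a aa ->]|bb]; first exact: fab.
by exists (g b); rewrite ?gK ?gba.
Qed.

Lemma sum_bij (A B : eqType) (f : A -> B) (g : B -> A) (la : seq A) (lb : seq B) (F : B -> nat) :
  uniq la -> uniq lb -> {in la, forall a, f a \in lb} -> {in lb, forall b, g b \in la} ->
  {in la, cancel f g} -> {in lb, cancel g f} ->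
  \sum_(a <- la) F (f a) = \sum_(b <- lb) F b.
Proof.
move=> ua ub fab gba fK gK; rewrite -(big_map f xpredT F); apply: perm_big.
exact: perm_map_bij fK gK.
Qed.

Lemma count_bij (A B : eqType) (f : A -> B) (g : B -> A) (la : seq A) (lb : seq B) (P : pred B) :
  uniq la -> uniq lb -> {in la, forall a, f a \in lb} -> {in lb, forall b, g b \in la} ->
  {in la, cancel f g} -> {in lb, cancel g f} ->
  count (fun a => P (f a)) la = count P lb.
Proof.
move=> ua ub fab gba fK gK; rewrite -(count_map f P).
by apply/permP; apply: perm_map_bij fK gK.
Qed.

Lemma sum_ins (F : seq nat -> nat) (l : seq nat) (x : nat) :
  uniq l -> x \notin l ->
  \sum_(L <- permutations l) \sum_(r <- iota 0 (size l).+1) F (ins r x L)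
  = \sum_(L <- permutations (rcons l x)) F L.
Proof.
move=> ul xl.
rewrite -(big_allpairs (F := fun i => F (ins i.2 x i.1))).
have ulx : uniq (rcons l x) by rewrite rcons_uniq xl ul.
apply: (sum_bij (f := fun i => ins i.2 x i.1) (g := fun L => (filter (predC1 x) L, index x L))).
- apply: allpairs_uniq; rewrite ?permutations_uniq ?iota_uniq //.
  by move=> [a b] [c d] _ _ [/= -> ->].
- exact: permutations_uniq.
- move=> [L r] /allpairsP [[L' r'] [/= L'l r'i [-> ->]]].
  rewrite mem_permutations in L'l; rewrite mem_permutations.
  by rewrite (perm_trans (perm_ins _ _ _)) // perm_sym perm_rcons perm_cons perm_sym.
- move=> L; rewrite mem_permutations => Ll.
  have uL : uniq L by rewrite (perm_uniq Ll).
  have xL : x \in L by rewrite (perm_mem Ll) mem_rcons mem_head.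
  apply/allpairsP; exists (filter (predC1 x) L, index x L); split => //=.
  + rewrite mem_permutations.
    rewrite (perm_trans (perm_filter _ Ll)) // filter_rcons /= eqxx /=.
    suff -> : [seq x0 <- l | predC1 x x0] = l by [].
    apply/all_filterP; apply/allP => z zl /=.
    by apply/eqP => zx; rewrite -zx zl in xl.
  + rewrite -[_ :: _]/(iota 0 (size l).+1) mem_iota /= add0n.
    by rewrite -(size_rcons l x) -(perm_size Ll) index_mem.
- move=> [L r] /allpairsP [[L' r'] [/= L'l r'i [-> ->]]].
  rewrite mem_permutations in L'l.
  have xL' : x \notin L' by rewrite (perm_mem L'l).
  rewrite -[_ :: _]/(iota 0 (size l).+1) mem_iota /= add0n ltnS -(perm_size L'l) in r'i.
  by rewrite filter_ins // index_ins.
- move=> L; rewrite mem_permutations => Ll /=.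
  have uL : uniq L by rewrite (perm_uniq Ll).
  have xL : x \in L by rewrite (perm_mem Ll) mem_rcons mem_head.
  exact: ins_index.
Qed.

Fixpoint repl (p : pred nat) (l src : seq nat) : seq nat :=
  match l with
  | [::] => [::]
  | x :: l' => if p x then head x src :: repl p l' (behead src)
               else x :: repl p l' src
  end.

Lemma take_repl p k l src : take k (repl p l src) = repl p (take k l) src.
Proof.
elim: l k src => [|x l IH] [|k] src //=; case: (p x) => /=; rewrite ?IH //; by case: (p x).
Qed.

Lemma perm_repl p l src : (count p l <= size src)%N ->
  perm_eq (repl p l src) (filter (predC p) l ++ take (count p l) src).
Proof.
elim: l src => [|x l IH] src /=; first by rewrite take0.
case px: (p x) => /=.
  case: src => [|y src] //= cs.
  rewrite add0n -(cat1s y (take _ _)) perm_sym perm_catCA /= perm_cons perm_sym IH //.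
by rewrite add0n => cs; rewrite perm_cons IH.
Qed.

Lemma repl_repl p q l src :
  size src = count p l -> all q src -> (forall x, x \in l -> ~~ p x -> ~~ q x) ->
  repl q (repl p l src) (filter p l) = l.
Proof.
elim: l src => [|x l IH] src //=.
case px: (p x) => /=.
  case: src => [|y src] //= [cs] /andP[qy qs] H.
  rewrite add0n in cs.
  rewrite qy; congr cons; apply: IH => // z zl; by apply: H; rewrite inE zl orbT.
move=> cs qs H; rewrite ?add0n in cs; have -> : q x = false.
  by apply/negbTE; apply: H; rewrite ?mem_head ?px.
congr cons; apply: IH => // z zl; by apply: H; rewrite inE zl orbT.
Qed.

Lemma filter_repl p q l src :
  size src = count p l -> all q src -> (forall x, x \in l -> ~~ p x -> ~~ q x) ->
  filter q (repl p l src) = src.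
Proof.
elim: l src => [|x l IH] src //=; first by case: src.
case px: (p x) => /=.
  case: src => [|y src] //= [cs] /andP[qy qs] H.
  rewrite add0n in cs.
  rewrite qy; congr cons; apply: IH => // z zl; by apply: H; rewrite inE zl orbT.
move=> cs qs H; rewrite ?add0n in cs; have -> : q x = false.
  by apply/negbTE; apply: H; rewrite ?mem_head ?px.
apply: IH => // z zl; by apply: H; rewrite inE zl orbT.
Qed.

Lemma count_allpairs2 (A B : eqType) (Q : pred B) (la : seq A) (lb : seq B) :
  count (fun g => Q g.2) [seq (x, y) | x <- la, y <- lb] = size la * count Q lb.
Proof.
elim: la => [|a la IH] //=; rewrite count_cat IH count_map mulSn; congr (_ + _).
Qed.

Lemma count_take_perm (W X : seq nat) k :
  uniq W -> uniq X -> size X = k -> {subset X <= W} ->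
  count (fun Z => perm_eq (take k Z) X) (permutations W) = k`! * (size W - k)`!.
Proof.
move=> uW uX sX XW.
set R := filter (predC (mem X)) W.
have uR : uniq R by rewrite filter_uniq.
have WXR : perm_eq W (X ++ R).
  rewrite -(perm_filterC (mem X) W) perm_cat2r.
  apply: uniq_perm; rewrite ?filter_uniq // => z; rewrite mem_filter.
  by apply/andP/idP => [[]//|zX]; split => //; apply: XW.
have sR : size R = size W - k by rewrite (perm_size WXR) size_cat sX addKn.
rewrite -size_filter.
have -> : size (filter (fun Z => perm_eq (take k Z) X) (permutations W)) =
          size [seq x ++ y | x <- permutations X, y <- permutations R].
  apply: perm_size; apply: uniq_perm.
  - by rewrite filter_uniq ?permutations_uniq.
  - apply: allpairs_uniq; rewrite ?permutations_uniq //.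
    move=> [a b] [c d] /allpairsP [[a' b'] [/= ha hb [-> ->]]].
    move=> /allpairsP [[c' d'] [/= hc hd [-> ->]]] /= E.
    rewrite mem_permutations in ha; rewrite mem_permutations in hc.
    have sa : size a' = k by rewrite (perm_size ha).
    have sc : size c' = k by rewrite (perm_size hc).
    have := congr1 (take k) E; rewrite !take_size_cat // => ac.
    have := congr1 (drop k) E; rewrite !drop_size_cat // => bd.
    by rewrite ac bd.
  - move=> Z; rewrite mem_filter mem_permutations.
    apply/andP/allpairsP => [[tZ ZW]|[[a b] [/= ha hb ->]]].
      exists (take k Z, drop k Z); rewrite /= cat_take_drop mem_permutations; split => //.
      rewrite mem_permutations -(perm_cat2l X).
      apply: (perm_trans _ (perm_trans ZW WXR)).
      by rewrite -{2}[Z](cat_take_drop k) perm_cat2r perm_sym.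
    rewrite mem_permutations in ha; rewrite mem_permutations in hb.
    have sa : size a = k by rewrite (perm_size ha).
    rewrite take_size_cat //; split => //.
    apply: (@perm_trans _ (X ++ R)); by rewrite ?perm_cat // perm_sym.
by rewrite size_allpairs !size_permutations // sX sR.
Qed.

Definition getl (T : Type) (c : cell T) : option T :=
  match c with inl e => Some e | inr _ => None end.
Definition getr (T : Type) (c : cell T) : option nat :=
  match c with inr w => Some w | inl _ => None end.

Definition enc (T : Type) (N : nat) (Yp Sp : seq (T * nat)) : mstate T :=
  inr N :: inr (size Yp) :: map (fun p => inl p.1) (Yp ++ Sp)
    ++ map (fun p => inr p.2) (Yp ++ Sp).

Definition dec (T : Type) (m : mstate T) : nat * seq (T * nat) * seq (T * nat) :=
  match m with
  | inr N :: inr a :: rest =>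
      let P := zip (pmap (@getl T) rest) (pmap (@getr T) rest) in
      (N, take a P, drop a P)
  | _ => (0%N, [::], [::])
  end.

Definition astep (k n : nat) (T : Type) (m : mstate T) (x : T) : fdist (mstate T) :=
  let: (N, Yp, Sp) := dec m in
  let t := (N %% n)%N in
  [seq (GRing.inv ((t.+1)%:R : rat),
        enc N.+1 (if t == 0%N then Sp else Yp)
                 (take k (ins r (x, N) (if t == 0%N then [::] else Sp))))
  | r <- iota 0 t.+1].

Definition aout (k n : nat) (T : Type) (m : mstate T) : seq (T * nat) :=
  let: (N, Yp, Sp) := dec m in
  let Z := filter (fun p => N - n <= p.2)%N Yp in
  Z ++ take (k - size Z) Sp.

Definition alg (k n : nat) (T : Type) : salg T :=
  SAlg (enc 0 [::] [::]) (@astep k n T) (@aout k n T).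

Definition gstep (n N : nat) (g : seq nat * seq nat) (r : nat) :=
  if (N %% n == 0)%N then (g.2, ins r N [::]) else (g.1, ins r N g.2).

Fixpoint GL (n N : nat) : seq (seq nat * seq nat) :=
  match N with
  | 0 => [:: ([::], [::])]
  | N'.+1 => flatten [seq [seq gstep n N' g r | r <- iota 0 (N' %% n).+1] | g <- GL n N']
  end.

Fixpoint wt (n N : nat) : rat :=
  match N with
  | 0 => 1%R
  | N'.+1 => (wt n N' * GRing.inv (((N' %% n).+1)%:R))%R
  end.

Definition sp (T : Type) (s : nat -> T) (i : nat) := (s i, i).

Definition conc (k : nat) (T : Type) (s : nat -> T) (N : nat) (g : seq nat * seq nat) :=
  enc N (map (sp s) (take k g.1)) (map (sp s) (take k g.2)).

Lemma pmap_getl_l (T : Type) (l : seq (T * nat)) :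
  pmap (@getl T) (map (fun p => inl p.1) l) = map fst l.
Proof. by elim: l => //= x l ->. Qed.
Lemma pmap_getl_r (T : Type) (l : seq (T * nat)) :
  pmap (@getl T) (map (fun p => inr p.2) l) = [::].
Proof. by elim: l. Qed.
Lemma pmap_getr_l (T : Type) (l : seq (T * nat)) :
  pmap (@getr T) (map (fun p => inl p.1) l) = [::].
Proof. by elim: l. Qed.
Lemma pmap_getr_r (T : Type) (l : seq (T * nat)) :
  pmap (@getr T) (map (fun p => inr p.2) l) = map snd l.
Proof. by elim: l => //= x l ->. Qed.

Lemma zip_fst_snd (A B : Type) (l : seq (A * B)) : zip (map fst l) (map snd l) = l.
Proof. by elim: l => [|[a b] l IH] //=; rewrite IH. Qed.

Lemma dec_enc (T : Type) N (Yp Sp : seq (T * nat)) : dec (enc N Yp Sp) = (N, Yp, Sp).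
Proof.
rewrite /dec /enc !pmap_cat pmap_getl_l pmap_getl_r pmap_getr_l pmap_getr_r cats0 /=.
by rewrite zip_fst_snd take_size_cat // drop_size_cat.
Qed.

Lemma astep_conc k n T (s : nat -> T) N g :
  astep k n (conc k s N g) (s N) =
  [seq (GRing.inv (((N %% n).+1)%:R : rat), conc k s N.+1 (gstep n N g r)) | r <- iota 0 (N %% n).+1].
Proof.
rewrite /astep /conc dec_enc; apply: eq_map => r /=; congr pair.
rewrite /gstep; case: ifP => _ /=; congr enc.
  by rewrite !ins_nil /=; case: k.
rewrite [RHS]map_take map_ins -take_ins -map_take.
by rewrite take_takel // map_take take_ins.
Qed.

Lemma run_eq k n T (s : nat -> T) N :
  run (alg k n T) s N = [seq (wt n N, conc k s N g) | g <- GL n N].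
Proof.
elim: N => [|N IH]; first by rewrite /= /conc /=; congr cons; congr pair; rewrite !take0.
change (run (alg k n T) s N.+1) with
  (flatten [seq [seq ((p.1 * q.1)%R, q.2) | q <- step (alg k n T) p.2 (s N)] | p <- run (alg k n T) s N]).
change (GL n N.+1) with
  (flatten [seq [seq gstep n N g r | r <- iota 0 (N %% n).+1] | g <- GL n N]).
rewrite IH map_flatten -!map_comp; congr flatten; apply: eq_map => g.
change (step (alg k n T)) with (@astep k n T).
rewrite /comp astep_conc -map_comp.
rewrite -map_comp; by apply: eq_map => r.
Qed.

Definition bst (n N : nat) := n * (N.-1 %/ n).
Definition New (n N : nat) := iota (bst n N) (N - bst n N).
Definition Old (n N : nat) := if n <= bst n N then iota (bst n N - n) n else [::].
Definition GS (n N : nat) :=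
  [seq (x, y) | x <- permutations (Old n N), y <- permutations (New n N)].

Lemma divn_rep n q r : r < n -> (q * n + r) %/ n = q.
Proof.
move=> rn; have n0 : 0 < n by apply: leq_ltn_trans rn.
by rewrite divnMDl // divn_small // addn0.
Qed.

Lemma bst0 n : bst n 0 = 0.
Proof. by rewrite /bst div0n muln0. Qed.

Lemma bstS_nz n N : 0 < n -> N %% n != 0 ->
  bst n N.+1 = bst n N /\ N - bst n N = N %% n.
Proof.
move=> n0 h; have E := divn_eq N n; have lt := ltn_pmod N n0.
have h' : 0 < N %% n by rewrite lt0n.
have E1 : N.-1 = N %/ n * n + (N %% n).-1.
  by move: E h'; generalize (N %/ n) (N %% n) => q r; lia.
have D : N.-1 %/ n = N %/ n by rewrite E1 divn_rep //; lia.
rewrite /bst D /=; split => //; rewrite mulnC.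
by move: E; generalize (N %/ n) (N %% n) => q r; lia.
Qed.

Lemma bstS_z n N : 0 < n -> N %% n = 0 ->
  bst n N.+1 = N /\ (0 < N -> bst n N = N - n).
Proof.
move=> n0 h; have E := divn_eq N n; rewrite h addn0 in E.
rewrite /bst /=; split; first by rewrite mulnC -E.
move=> N0; move: E; case Eq: (N %/ n) => [|q] E; first by lia.
rewrite mulSn in E.
have E1 : N.-1 = q * n + n.-1 by lia.
rewrite E1 divn_rep; last by lia.
rewrite mulnC; lia.
Qed.

Lemma bst_range n N : 0 < n -> 0 < N ->
  [/\ bst n N < N, N <= bst n N + n & (bst n N = 0 \/ n <= bst n N)].
Proof.
move=> n0 N0; have E := divn_eq N.-1 n; have lt := ltn_pmod N.-1 n0.
rewrite /bst; split.
- rewrite mulnC; lia.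
- rewrite mulnC; lia.
case: (N.-1 %/ n) => [|q]; [left; lia | right; rewrite mulnS; lia].
Qed.

Lemma New_z n N : 0 < n -> N %% n = 0 -> New n N.+1 = [:: N] /\ Old n N.+1 = New n N.
Proof.
move=> n0 h; have [b1 b0] := bstS_z n0 h.
rewrite /New /Old b1 subSnn /=; split => //.
case: N h b1 b0 => [|N] h b1 b0.
  by rewrite bst0 leqNgt n0.
have nN : n <= N.+1.
  by apply: dvdn_leq => //; rewrite /dvdn h.
rewrite nN b0 //; congr iota; lia.
Qed.

Lemma New_nz n N : 0 < n -> N %% n != 0 ->
  [/\ New n N.+1 = rcons (New n N) N, Old n N.+1 = Old n N & size (New n N) = N %% n].
Proof.
move=> n0 h; have [b1 b2] := bstS_nz n0 h.
have h' : 0 < N %% n by rewrite lt0n.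
rewrite /New /Old b1 size_iota b2; split => //.
have -> : N.+1 - bst n N = N %% n + 1 by lia.
by rewrite iotaD cats1 /=; congr rcons; lia.
Qed.

Lemma sum_GL n N : 0 < n -> exists c, forall F : seq nat * seq nat -> nat,
  \sum_(g <- GL n N) F g = c * \sum_(g <- GS n N) F g.
Proof.
move=> n0; elim: N => [|N [c IH]].
  exists 1 => F; rewrite mul1n /GS /Old /New bst0 leqNgt n0 /=.
  by rewrite !big_cons !big_nil.
have step : forall F : seq nat * seq nat -> nat, \sum_(g <- GL n N.+1) F g =
   c * \sum_(g <- GS n N) \sum_(r <- iota 0 (N %% n).+1) F (gstep n N g r).
  move=> F; rewrite -IH.
  change (GL n N.+1) with
    (flatten [seq [seq gstep n N g r | r <- iota 0 (N %% n).+1] | g <- GL n N]).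
  by rewrite big_flatten big_map; apply: eq_bigr => g _; rewrite big_map.
case: (eqVneq (N %% n) 0) => h.
- have [N1 O1] := New_z n0 h.
  exists (c * size (permutations (Old n N))) => F.
  rewrite step h /GS big_allpairs N1 O1 -mulnA; congr (_ * _).
  transitivity (\sum_(i1 <- permutations (Old n N)) \sum_(y <- permutations (New n N)) F (y, [:: N])).
    apply: eq_bigr => x _; apply: eq_bigr => y _.
    by rewrite (_ : iota 0 (0).+1 = [:: 0]) // big_seq1 /gstep h eqxx ins_nil.
  rewrite big_const_seq count_predT iter_addn_0 mulnC; congr (_ * _).
  rewrite big_allpairs; apply: eq_bigr => y _.
  by rewrite (_ : permutations [:: N] = [:: [:: N]]) // big_seq1.
- have [N1 O1 sN] := New_nz n0 h.
  exists c => F; rewrite step; congr (_ * _).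
  rewrite /GS !big_allpairs O1 N1; apply: eq_bigr => x _.
  rewrite -(sum_ins (fun L => F (x, L))) ?iota_uniq //; last first.
    by rewrite /New mem_iota; lia.
  apply: eq_bigr => y _; rewrite sN; apply: eq_bigr => r _.
  by rewrite /gstep (negbTE h).
Qed.

Definition outpos (k n N : nat) (g : seq nat * seq nat) : seq nat :=
  let Z := filter (fun i => N - n <= i) (take k g.1) in
  Z ++ take (k - size Z) (take k g.2).

Lemma filter_none (p : pred nat) l : (forall x, x \in l -> ~~ p x) -> filter p l = [::].
Proof.
elim: l => //= x l IH H; rewrite (negbTE (H x (mem_head _ _))) IH // => y yl.
by apply: H; rewrite inE yl orbT.
Qed.

Lemma filter_all (p : pred nat) l : (forall x, x \in l -> p x) -> filter p l = l.
Proof. by move=> H; apply/all_filterP/allP. Qed.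

Lemma count_all (p : pred nat) l : (forall x, x \in l -> p x) -> count p l = size l.
Proof. by move=> H; rewrite -size_filter filter_all. Qed.

Lemma inGS n N g : g \in GS n N -> perm_eq g.1 (Old n N) /\ perm_eq g.2 (New n N).
Proof.
case/allpairsP => [[x y] [/= hx hy ->]] /=.
by rewrite -!mem_permutations.
Qed.

Lemma take_count (p : pred nat) k l : count p (take k l) <= count p l.
Proof. by rewrite -{2}(cat_take_drop k l) count_cat leq_addr. Qed.

Lemma count_GS_lt k n N X : 0 < k -> k <= n -> n <= N ->
  N - bst n N < n -> uniq X -> size X = k -> all (in_window n N) X ->
  count (fun g => perm_eq (outpos k n N g) X) (GS n N) = (N - bst n N)`! * (k`! * (n - k)`!).
Proof.
move=> k0 kn nN tn uX sX wX.
have n0 : 0 < n by lia.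
have [bN Nb bcase] := bst_range n0 (leq_trans n0 nN).
set b := bst n N in bN Nb bcase tn *.
set t := N - b in tn *.
have bn : n <= b by case: bcase => // b0; lia.
set e := N - n.
have ee : b - n + t = e by rewrite /t /e; lia.
set Ex := iota (b - n) t.
set S := iota e (n - t).
set Pn := iota b t.
set W := iota e n.
have OE : Old n N = Ex ++ S.
  rewrite /Old -/b bn /Ex /S -ee.
  have -> : iota (b - n) n = iota (b - n) (t + (n - t)) by rewrite subnKC // ltnW.
  by rewrite iotaD.
have NE : New n N = Pn by [].
have WE : W = S ++ Pn.
  rewrite /W /S /Pn.
  have -> : iota e n = iota e ((n - t) + t) by rewrite subnK // ltnW.
  rewrite iotaD; congr (_ ++ iota _ _); rewrite /e /t; lia.
set notS := fun i : nat => i < e.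
set inPn := fun i : nat => b <= i.
have Exr x : x \in Ex -> (b - n <= x < e) by rewrite mem_iota ee.
have Sr x : x \in S -> (e <= x < b) by rewrite mem_iota; lia.
have Pr x : x \in Pn -> (b <= x < N) by rewrite mem_iota; lia.
have cntO : count notS (Ex ++ S) = t.
  rewrite count_cat (count_all (p := notS)) ?size_iota; last first.
    by move=> x /Exr; rewrite /notS; lia.
  rewrite (eq_in_count (a2 := pred0)) ?count_pred0 ?addn0 // => x /Sr.
  by rewrite /notS /=; lia.
have cntW : count inPn W = t.
  rewrite WE count_cat (count_all (p := inPn) (l := Pn)) ?size_iota; last first.
    by move=> x /Pr; rewrite /inPn; lia.
  rewrite (eq_in_count (a2 := pred0)) ?count_pred0 // => x /Sr.
  by rewrite /inPn /=; lia.
have fO : filter notS (Ex ++ S) = Ex.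
  rewrite filter_cat (filter_all (p := notS) (l := Ex)); last first.
    by move=> x /Exr; rewrite /notS; lia.
  rewrite (filter_none (p := notS) (l := S)) ?cats0 //.
  by move=> x /Sr; rewrite /notS; lia.
have fOc : filter (predC notS) (Ex ++ S) = S.
  rewrite filter_cat (filter_all (p := predC notS) (l := S)); last first.
    by move=> x /Sr; rewrite /notS /=; lia.
  rewrite (filter_none (p := predC notS) (l := Ex)) //.
  by move=> x /Exr; rewrite /notS /=; lia.
have fW : filter inPn W = Pn.
  rewrite WE filter_cat (filter_all (p := inPn) (l := Pn)); last first.
    by move=> x /Pr; rewrite /inPn; lia.
  rewrite (filter_none (p := inPn) (l := S)) //.
  by move=> x /Sr; rewrite /inPn; lia.
have fWc : filter (predC inPn) W = S.
  rewrite WE filter_cat (filter_all (p := predC inPn) (l := S)); last first.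
    by move=> x /Sr; rewrite /inPn /=; lia.
  rewrite (filter_none (p := predC inPn) (l := Pn)) ?cats0 //.
  by move=> x /Pr; rewrite /inPn /=; lia.
rewrite (eq_in_count (a2 := fun g => perm_eq (take k (repl notS g.1 g.2)) X)); last first.
  move=> [LO LN] /inGS [/= hO hN]; rewrite OE in hO; rewrite NE in hN.
  have sLO : size LO = n by rewrite (perm_size hO) size_cat !size_iota; lia.
  have sLN : size LN = t by rewrite (perm_size hN) size_iota.
  have cLO : count notS LO = t by rewrite (permP hO).
  suff PE : perm_eq (outpos k n N (LO, LN)) (take k (repl notS LO LN)).
    by rewrite (permPl PE).
  rewrite /outpos /= take_repl.
  set j := count notS (take k LO).
  have jt : j <= t by rewrite -cLO take_count.
  rewrite perm_sym (permPl (perm_repl _)) ?sLN // perm_sym.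
  have sk : size (take k LO) = k by rewrite size_take sLO; case: ltngtP kn.
  have -> : filter (fun i => N - n <= i) (take k LO) = filter (predC notS) (take k LO).
    by apply: eq_filter => x; rewrite /notS /= -leqNgt.
  rewrite size_filter.
  have -> : k - count (predC notS) (take k LO) = j.
    by have := count_predC notS (take k LO); rewrite sk -/j; lia.
  by rewrite take_takel // -sk /j count_size.
pose Phi (g : seq nat * seq nat) := (filter notS g.1, repl notS g.1 g.2).
pose Psi (h : seq nat * seq nat) := (repl inPn h.2 h.1, filter inPn h.2).
pose cod := [seq (x, y) | x <- permutations Ex, y <- permutations W].
have -> : count (fun g => perm_eq (take k (repl notS g.1 g.2)) X) (GS n N)
        = count (fun h => perm_eq (take k h.2) X) cod.
  apply: (count_bij (f := Phi) (g := Psi)).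
  - by apply: allpairs_uniq; rewrite ?permutations_uniq // => -[a b1] [c d] _ _ [-> ->].
  - by apply: allpairs_uniq; rewrite ?permutations_uniq // => -[a b1] [c d] _ _ [-> ->].
  - move=> [LO LN] /inGS [/= hO hN]; rewrite OE in hO; rewrite NE in hN.
    have sLN : size LN = t by rewrite (perm_size hN) size_iota.
    have cLO : count notS LO = t by rewrite (permP hO).
    apply: allpairs_f; rewrite mem_permutations.
      by rewrite -fO perm_filter.
    rewrite (permPl (perm_repl _)) ?cLO ?sLN // -sLN take_size WE.
    by rewrite perm_cat // -fOc perm_filter.
  - move=> [E Z] /allpairsP [[E' Z'] [/= hE hZ [-> ->]]].
    rewrite mem_permutations in hE; rewrite mem_permutations in hZ.
    have sE : size E' = t by rewrite (perm_size hE) size_iota.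
    have cZ : count inPn Z' = t by rewrite (permP hZ).
    rewrite /GS; apply: allpairs_f; rewrite mem_permutations ?NE.
      rewrite (permPl (perm_repl _)) ?cZ ?sE // -sE take_size OE.
      by rewrite perm_catC perm_cat // -fWc perm_filter.
    by rewrite -fW perm_filter.
  - move=> [LO LN] /inGS [/= hO hN]; rewrite OE in hO; rewrite NE in hN.
    have sLN : size LN = t by rewrite (perm_size hN) size_iota.
    have cLO : count notS LO = t by rewrite (permP hO).
    have aLN : all inPn LN by apply/allP => x; rewrite (perm_mem hN) => /Pr; rewrite /inPn; lia.
    have H : forall x, x \in LO -> ~~ notS x -> ~~ inPn x.
      move=> x; rewrite (perm_mem hO) mem_cat => /orP[/Exr|/Sr]; rewrite /notS /inPn; lia.
    rewrite /Phi /Psi /=; congr pair.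
      by apply: repl_repl => //; rewrite sLN.
    by apply: filter_repl => //; rewrite sLN.
  - move=> [E Z] /allpairsP [[E' Z'] [/= hE hZ [-> ->]]].
    rewrite mem_permutations in hE; rewrite mem_permutations in hZ.
    have sE : size E' = t by rewrite (perm_size hE) size_iota.
    have cZ : count inPn Z' = t by rewrite (permP hZ).
    have aE : all notS E' by apply/allP => x; rewrite (perm_mem hE) => /Exr; rewrite /notS; lia.
    have H : forall x, x \in Z' -> ~~ inPn x -> ~~ notS x.
      move=> x; rewrite (perm_mem hZ) WE mem_cat => /orP[/Sr|/Pr]; rewrite /notS /inPn; lia.
    rewrite /Phi /Psi /=; congr pair.
      by apply: filter_repl => //; rewrite sE.
    by apply: repl_repl => //; rewrite sE.
rewrite /cod (count_allpairs2 (fun y => perm_eq (take k y) X)) size_permutations ?iota_uniq // size_iota.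
congr (_ * _); rewrite count_take_perm ?iota_uniq ?size_iota //.
move=> x xX; have := allP wX x xX; rewrite /in_window mem_iota; lia.
Qed.

Lemma Old_lt n N x : x \in Old n N -> x < bst n N.
Proof.
rewrite /Old; case: ifP => // h; rewrite mem_iota; lia.
Qed.

Lemma count_GS k n N X : 0 < k -> k <= n -> n <= N ->
  uniq X -> size X = k -> all (in_window n N) X ->
  count (fun g => perm_eq (outpos k n N g) X) (GS n N) * 'C(n, k) = size (GS n N).
Proof.
move=> k0 kn nN uX sX wX.
have n0 : 0 < n by lia.
have [bN Nb bcase] := bst_range n0 (leq_trans n0 nN).
rewrite /GS size_allpairs.
rewrite (size_permutations (s := New n N)) ?iota_uniq // size_iota.
case: (ltngtP (N - bst n N) n) => tn; last 2 first.
- lia.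
- rewrite (eq_in_count (a2 := fun g => perm_eq (take k g.2) X)); last first.
    move=> [LO LN] /inGS [/= hO hN]; rewrite /outpos /=.
    rewrite (filter_none (p := fun i => N - n <= i)) /= ?subn0 ?take_takel //.
    move=> x /mem_take; rewrite (perm_mem hO) => /Old_lt; lia.
  rewrite (count_allpairs2 (fun y => perm_eq (take k y) X)).
  rewrite count_take_perm ?iota_uniq ?size_iota //; last first.
    move=> x xX; have := allP wX x xX; rewrite /in_window mem_iota; lia.
  by rewrite tn -mulnA [X in _ * X]mulnC bin_fact.
have bn : n <= bst n N by case: bcase => // b0; lia.
rewrite count_GS_lt // size_permutations; last by rewrite /Old bn iota_uniq.
rewrite /Old bn size_iota.
by rewrite -mulnA [X in _ * X]mulnC bin_fact // mulnC.
Qed.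
Import Order.TTheory GRing.Theory Num.Theory.

Lemma In_mem (A : eqType) (x : A) l : List.In x l -> x \in l.
Proof. elim: l => //= y l IH [->|h]; rewrite inE ?eqxx //; by rewrite IH ?orbT. Qed.

Lemma sum_count (A : Type) (P : pred A) l : \sum_(g <- l) (P g : nat) = count P l.
Proof. by elim: l => [|x l IH]; rewrite ?big_nil ?big_cons ?IH. Qed.

Lemma count_GL n N (P : pred (seq nat * seq nat)) : 0 < n ->
  exists c, count P (GL n N) = c * count P (GS n N) /\ size (GL n N) = c * size (GS n N).
Proof.
move=> n0; have [c H] := sum_GL N n0; exists c; split.
  by rewrite -!sum_count H.
by rewrite -!count_predT -!sum_count H.
Qed.

Lemma GL_GS n N g : 0 < n -> g \in GL n N -> g \in GS n N.
Proof.
move=> n0 gl; have [c [H _]] := count_GL N (fun g => g \notin GS n N) n0.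
have : count (fun g => g \notin GS n N) (GS n N) = 0.
  by rewrite (eq_in_count (a2 := pred0)) ?count_pred0 // => x ->.
move=> H0; rewrite H0 muln0 in H; apply/negPn/negP => gn.
have : 0 < count (fun g => g \notin GS n N) (GL n N).
  by rewrite -has_count; apply/hasP; exists g.
by rewrite H.
Qed.

Lemma size_GL n N : size (GL n N.+1) = (N %% n).+1 * size (GL n N).
Proof.
change (GL n N.+1) with
  (flatten [seq [seq gstep n N g r | r <- iota 0 (N %% n).+1] | g <- GL n N]).
elim: (GL n N) => [|g l IH]; first by rewrite muln0.
by rewrite /= size_cat IH size_map size_iota mulnS.
Qed.

Lemma wt_size n N : (wt n N * (size (GL n N))%:R = 1 :> rat)%R.
Proof.
elim: N => [|N IH]; first by rewrite /= mul1r.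
rewrite size_GL natrM /= mulrA -(mulrA (wt n N)) mulVf ?pnatr_eq0 // mulr1.
by rewrite IH.
Qed.

Lemma count_lt_iota e a m : count (fun i => i < e) (iota a m) = minn (e - a) m.
Proof.
elim: m => [|m IH]; first by rewrite /= minn0.
rewrite -addn1 iotaD count_cat IH /= addn0; lia.
Qed.

Lemma bst_le n N : bst n N <= N.
Proof.
rewrite /bst mulnC; apply: leq_trans (leq_trunc_div _ _) _; lia.
Qed.

Lemma GS_lt n N g : g \in GS n N -> (forall x, x \in g.1 -> x < N) /\ (forall x, x \in g.2 -> x < N).
Proof.
move=> /inGS [h1 h2]; split => x.
  rewrite (perm_mem h1) => /Old_lt; have := bst_le n N; lia.
rewrite (perm_mem h2) mem_iota; have := bst_le n N; lia.
Qed.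

Lemma outpos_ok k n N g : 0 < k -> k <= n -> n <= N -> g \in GS n N ->
  [/\ uniq (outpos k n N g), size (outpos k n N g) = k & all (in_window n N) (outpos k n N g)].
Proof.
move=> k0 kn nN gS.
have n0 : 0 < n by lia.
have [bN Nb bcase] := bst_range n0 (leq_trans n0 nN).
have [h1 h2] := inGS gS.
have uO : uniq (Old n N) by rewrite /Old; case: ifP => _; rewrite ?iota_uniq.
have u1 : uniq g.1 by rewrite (perm_uniq h1).
have u2 : uniq g.2 by rewrite (perm_uniq h2) iota_uniq.
have m1 x : x \in take k g.1 -> x < bst n N.
  by move=> /mem_take; rewrite (perm_mem h1) => /Old_lt.
have m2 x : x \in take k g.2 -> bst n N <= x < N.
  move=> /mem_take; rewrite (perm_mem h2) mem_iota; lia.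
rewrite /outpos; set Z := filter (fun i => N - n <= i) (take k g.1).
have sZ : k - (N - bst n N) <= size Z.
  case: (ltngtP (N - bst n N) n) => tn; last by lia.
  - have bn : n <= bst n N by case: bcase => // b0; lia.
    have s1 : size g.1 = n by rewrite (perm_size h1) /Old bn size_iota.
    have sk : size (take k g.1) = k by rewrite size_takel // s1.
    have c1 : count (fun i => i < N - n) g.1 <= N - bst n N.
      rewrite (permP h1) /Old bn count_lt_iota; lia.
    have c2 := take_count (fun i => i < N - n) k g.1.
    have c3 := count_predC (fun i => i < N - n) (take k g.1).
    rewrite /Z size_filter (eq_count (a2 := predC (fun i => i < N - n))); last first.
      by move=> x; rewrite /= -leqNgt.
    rewrite leq_subLR -{1}sk -c3 leq_add2r; exact: leq_trans c2 c1.
  - lia.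
have s2 : size (take k g.2) = minn k (N - bst n N).
  by rewrite size_take_min (perm_size h2) size_iota.
split.
- rewrite cat_uniq filter_uniq ?take_uniq //=.
  rewrite andbT.
  apply/hasPn => x /mem_take /m2 xb; rewrite /Z mem_filter; apply/negP => /andP[_ /m1]; lia.
- rewrite size_cat size_take_min s2.
  have : size Z <= k by rewrite /Z size_filter; apply: leq_trans (count_size _ _) _; rewrite size_take_min geq_minl.
  lia.
- rewrite all_cat; apply/andP; split; apply/allP => x.
    rewrite /Z mem_filter /in_window => /andP[h /m1]; lia.
  move=> /mem_take /m2; rewrite /in_window; lia.
Qed.

Lemma aout_conc k n T (s : nat -> T) N g :
  aout k n (conc k s N g) = map (sp s) (outpos k n N g).
Proof.
rewrite /aout /conc dec_enc /outpos filter_map size_map map_cat map_take.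
by rewrite !map_take.
Qed.

Lemma words_enc T N (Yp Sp : seq (T * nat)) :
  words (enc N Yp Sp) = N :: size Yp :: map snd (Yp ++ Sp).
Proof.
rewrite /words /enc /= pmap_cat.
have -> : forall l : seq (T * nat), pmap (fun c : cell T => match c with inr w => Some w | inl _ => None end)
   (map (fun p => inl p.1) l) = [::] by elim.
have -> : forall l : seq (T * nat), pmap (fun c : cell T => match c with inr w => Some w | inl _ => None end)
   (map (fun p => inr p.2) l) = map snd l by elim => //= x l ->.
by [].
Qed.
Import Order.TTheory GRing.Theory Num.Theory.

Lemma fd_unif T t (f : nat -> mstate T) :
  is_fdist [seq (GRing.inv ((t.+1)%:R : rat), f r) | r <- iota 0 t.+1].
Proof.
rewrite /is_fdist; split.
  rewrite all_map; apply/allP => r _ /=; by rewrite invr_ge0 ler0n.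
rewrite big_map big_const_seq count_predT size_iota iter_addr addr0.
by rewrite -(mulr_natr (GRing.inv ((t.+1)%:R : rat))) mulVf // pnatr_eq0.
Qed.

Lemma astep_fdist k n T (m : mstate T) x : is_fdist (astep k n m x).
Proof. rewrite /astep; case: (dec m) => [[N Yp] Sp]; exact: fd_unif. Qed.

Theorem mainTheorem2 :
  exists C c : nat, forall k n : nat, (1 <= k)%N -> (k <= n)%N ->
    exists A : forall T : Type, salg T,
      forall (T : Type) (s : nat -> T),
        sw_sampler k n (A T) s /\ mem_bound (A T) s n (C * k) c.
Proof.
exists 6, 1 => k n k1 kn; exists (alg k n) => T s.
have n0 : 0 < n by lia.
split.
  split; first by move=> m x; apply: astep_fdist.
  move=> N nN; split.
    move=> p; rewrite run_eq => /List.in_map_iff [g [<- /In_mem gGL]] _.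
    have gS := GL_GS n0 gGL.
    have [u sz w] := outpos_ok k1 kn nN gS.
    exists (outpos k n N g); split => //=.
    by rewrite aout_conc.
  move=> X uX sX wX.
  rewrite run_eq /prob big_map.
  set P := fun g => perm_eq (outpos k n N g) X.
  rewrite (eq_bigl (fun g => P g)); last first.
    move=> g /=; rewrite aout_conc -map_comp.
    by rewrite (eq_map (g := id)) ?map_id.
  rewrite big_const_seq iter_addr addr0.
  have [c [cP cS]] := count_GL N P n0.
  have key := count_GS k1 kn nN uX sX wX.
  have Cnz : ('C(n, k)%:R : rat) != 0%R by rewrite pnatr_eq0 -lt0n bin_gt0.
  apply: (mulIf Cnz); rewrite mulVf //.
  rewrite -(mulr_natr (wt n N)) -mulrA -natrM cP -mulnA key -cS.
  exact: wt_size.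
move=> N p; rewrite run_eq => /List.in_map_iff [g [<- /In_mem gGL]] _.
have gS := GL_GS n0 gGL.
have [l1 l2] := GS_lt gS.
rewrite /conc [(_, _).2]/= words_enc.
rewrite /enc [size _]/= size_cat !size_map size_cat !size_map expn1.
split.
  have := size_take_min k g.1; have := size_take_min k g.2; lia.
apply/allP => x; rewrite !inE => /orP[/eqP->|/orP[/eqP->|]].
- lia.
- by rewrite size_take_min; lia.
rewrite -map_cat -map_comp (eq_map (g := id)) // map_id mem_cat.
by case/orP => /mem_take; [move/l1 | move/l2]; lia.
Qed.
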